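(* Let $a>0$, $\mu\ge 0$, $\lambda>0$, and let $f$ and $g$ be functions of $(x,t)$ such that there are positive constants $C_1,C_2$ with $$\sup\{|f(x,t)|: x\in[0,a],\ t\ge0\}\le C_1,\qquad \inf\{g(x,t): x\in[0,a),\ t\ge 0\}\ge C_2$$ ($g$ may be singular at $x=a$). Consider the equation $$\ddot{x}+\mu\dot{x}+f(x,t)=\lambda g(x,t)$$ with initial condition $x(0)=0$, $\dot{x}(0)=0$, whose physically meaningful solution takes values in $[0,a]$, $x=a$ being the touch-down position. If $\lambda>0$ is sufficiently large, then there is a finite time $t_c>0$, depending on $\lambda$ and $a$, such that the solution climbs monotonically to the touch-down position at $t=t_c$, that is, $$x(t_c)=\lim_{t\to t_c}x(t)=a\quad\text{and}\quad \dot{x}(t)>0\ \text{ for all } t\in(0,t_c).$$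
   Context: This is a normalized equation of motion for an electrostatic actuator with damping constant $\mu\ge0$, a restoring-type force $f$, and a Coulomb-like driving force $\lambda g$ with coupling parameter $\lambda$ resembling the applied voltage; the solution is considered only while $0\le x(t)<a$. *)

(* Defs.v *)
From Stdlib Require Import Reals.
From Coquelicot Require Import Coquelicot.
Open Scope R_scope.

(* A (maximal, physically meaningful) solution of
     x'' + mu x' + f(x,t) = lam g(x,t),  x(0)=0, x'(0)=0
   on the time interval [0,T), T in (0,+oo], with position x and velocity v,
   taking values in [0,a), and which ceases to be considered only when it
   reaches the touch-down position a (if T is finite, x(t) -> a as t -> T-). *)
Definition actuator_solution (a mu lam : R) (f g : R -> R -> R)
    (T : Rbar) (x v : R -> R) : Prop :=
  Rbar_lt (Finite 0) T /\
  x 0 = 0 /\ v 0 = 0 /\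
  filterlim x (at_right 0) (locally 0) /\
  filterlim v (at_right 0) (locally 0) /\
  (forall t, 0 <= t -> Rbar_lt (Finite t) T -> 0 <= x t < a) /\
  (forall t, 0 < t -> Rbar_lt (Finite t) T ->
     is_derive x t (v t) /\
     exists acc, is_derive v t acc /\
       acc + mu * v t + f (x t) t = lam * g (x t) t) /\
  (T = p_infty \/ exists tc, T = Finite tc /\ filterlim x (at_left tc) (locally a)).

(* Main.v *)
Require Import Defs.
From Stdlib Require Import Reals Lra.
From Coquelicot Require Import Coquelicot.
Open Scope R_scope.

Lemma deriv_lb (F : R -> R) (c s t : R) : s < t ->
 (forall u, s <= u <= t -> exists d, is_derive F u d /\ c <= d) ->
 c * (t - s) <= F t - F s.
Proof.
 intros Hst H.
 destruct (MVT_gen F s t (Derive F)) as [z [Hz Heq]].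
 - intros u Hu. rewrite Rmin_left in Hu by lra; rewrite Rmax_right in Hu by lra.
   destruct (H u ltac:(lra)) as [d [Hd _]]. now rewrite (is_derive_unique F u d Hd).
 - intros u Hu. rewrite Rmin_left in Hu by lra; rewrite Rmax_right in Hu by lra.
   destruct (H u ltac:(lra)) as [d [Hd _]].
   apply continuity_pt_filterlim. exact (@ex_derive_continuous R_AbsRing R_NormedModule F u (ex_intro _ d Hd)).
 - rewrite Rmin_left in Hz by lra; rewrite Rmax_right in Hz by lra.
   destruct (H z Hz) as [d [Hd Hc]]. rewrite (is_derive_unique _ _ _ Hd) in Heq.
   rewrite Heq. apply Rmult_le_compat_r; lra.
Qed.

Lemma exp_deriv (mu u : R) : is_derive (fun t => exp (mu * t)) u (mu * exp (mu * u)).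
Proof. auto_derive; [exact I| ring]. Qed.

Theorem theorem3 (a mu : R) (f g : R -> R -> R) (C1 C2 : R) :
  0 < a -> 0 <= mu -> 0 < C1 -> 0 < C2 ->
  (forall x t, 0 <= x <= a -> 0 <= t -> Rabs (f x t) <= C1) ->
  (forall x t, 0 <= x < a -> 0 <= t -> C2 <= g x t) ->
  exists Lam : R, forall lam : R, Lam < lam -> 0 < lam ->
    forall (T : Rbar) (x v : R -> R),
      actuator_solution a mu lam f g T x v ->
      exists tc : R, T = Finite tc /\ 0 < tc /\
        filterlim x (at_left tc) (locally a) /\
        (forall t, 0 < t < tc -> 0 < v t).
Proof.
  intros Ha Hmu HC1 HC2 Hf Hg.
  exists (C1 / C2). intros lam Hlam Hlam0 T x v
    [HT [Hx0 [Hv0 [Hxl [Hvl [Hrange [Hder Hend]]]]]]].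
  set (K := lam * C2 - C1).
  assert (HK : 0 < K).
  { unfold K. apply Rmult_lt_compat_r with (r := C2) in Hlam; [|lra].
    unfold Rdiv in Hlam. rewrite Rmult_assoc, Rinv_l, Rmult_1_r in Hlam; lra. }
  assert (Hacc : forall u, 0 < u -> Rbar_lt (Finite u) T ->
     is_derive x u (v u) /\ exists acc, is_derive v u acc /\ K <= acc + mu * v u).
  { intros u Hu HuT. destruct (Hder u Hu HuT) as [Hdx [acc [Hdv Heq]]].
    split; [exact Hdx|]. exists acc; split; [exact Hdv|].
    destruct (Hrange u ltac:(lra) HuT) as [Hxu1 Hxu2].
    pose proof (Hf (x u) u ltac:(lra) ltac:(lra)) as H1.
    pose proof (Hg (x u) u ltac:(lra) ltac:(lra)) as H2.
    apply Rabs_le_between in H1.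
    assert (lam * C2 <= lam * g (x u) u) by (apply Rmult_le_compat_l; lra).
    unfold K; lra. }
  assert (Hlt : forall u t, u <= t -> Rbar_lt (Finite t) T -> Rbar_lt (Finite u) T).
  { intros u t Hut HtT. apply Rbar_le_lt_trans with (Finite t); [simpl; lra| exact HtT]. }
  assert (Hvpos : forall t, 0 < t -> Rbar_lt (Finite t) T -> 0 < v t).
  { intros t Ht HtT.
    set (W := fun u => v u * exp (mu * u)).
    assert (HW : forall s, 0 < s < t -> K * (t - s) <= W t - W s).
    { intros s Hs. apply deriv_lb; [lra|].
      intros u Hu. destruct (Hacc u ltac:(lra) (Hlt u t ltac:(lra) HtT)) as [_ [acc [Hdv Hb]]].
      exists ((acc + mu * v u) * exp (mu * u)). split.
      - unfold W.
        replace ((acc + mu * v u) * exp (mu * u)) with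
          (plus (mult acc (exp (mu * u))) (mult (v u) (mu * exp (mu * u)))).
        + apply (is_derive_mult v (fun t => exp (mu * t)) u acc _ Hdv (exp_deriv mu u)).
          intros; apply Rmult_comm.
        + unfold plus, mult; simpl; ring.
      - assert (1 <= exp (mu * u)).
        { rewrite <- exp_0. destruct (Req_dec (mu*u) 0) as [E|E]; [rewrite E; lra|].
          left; apply exp_increasing. assert (0 <= mu * u) by (apply Rmult_le_pos; lra). lra. }
        nra. }
    set (E := exp (mu * t)).
    assert (HE : 0 < E) by apply exp_pos.
    assert (Heps : 0 < K * t / (4 * E)).
    { apply Rdiv_lt_0_compat; nra. }
    apply filterlim_locally with (eps := mkposreal _ Heps) in Hvl.
    destruct Hvl as [d Hd].
    set (y := Rmin (d/2) (t/2)).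
    assert (Hy0 : 0 < y) by (unfold y; apply Rmin_glb_lt; pose proof (cond_pos d); lra).
    assert (Hyt : y <= t/2) by apply Rmin_r.
    assert (Hyd : y <= d/2) by apply Rmin_l.
    assert (Hb : ball 0 (K * t / (4 * E)) (v y)).
    { apply Hd; [|exact Hy0]. unfold ball; simpl; unfold AbsRing_ball, abs, minus, plus, opp; simpl.
      rewrite Ropp_0, Rplus_0_r, Rabs_right by lra. pose proof (cond_pos d); lra. }
    unfold ball in Hb; simpl in Hb; unfold AbsRing_ball, abs, minus, plus, opp in Hb; simpl in Hb.
    rewrite Ropp_0, Rplus_0_r in Hb.
    pose proof (HW y ltac:(lra)) as HWy.
    assert (Hey : 0 < exp (mu * y) <= E).
    { split; [apply exp_pos|]. unfold E. destruct (Req_dec (mu*y) (mu*t)) as [Q|Q]; [rewrite Q; lra|].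
      left; apply exp_increasing. assert (mu * y <= mu * t) by (apply Rmult_le_compat_l; lra). lra. }
    assert (HWyb : - (K * t / (4 * E)) * E <= W y).
    { unfold W. apply Rabs_def2 in Hb. destruct Hb as [Hb1 Hb2].
      destruct (Rle_dec 0 (v y)). { assert (0 <= v y * exp (mu*y)) by (apply Rmult_le_pos; lra).
        assert (0 <= K * t / (4 * E)) by lra. nra. }
      nra. }
    replace (- (K * t / (4 * E)) * E) with (- (K * t / 4)) in HWyb by (field; lra).
    assert (0 < W t) by nra.
    unfold W in H. fold E in H.
    destruct (Rle_dec (v t) 0); [|lra]. nra. }
  destruct Hend as [Hinf | [tc [Htc Hlim]]].
  - exfalso. subst T.
    set (P := fun u => v u + mu * x u).
    assert (HP : forall t, 1 < t -> K * (t - 1) <= P t - P 1).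
    { intros t Ht. apply deriv_lb; [lra|]. intros u Hu.
      destruct (Hacc u ltac:(lra) I) as [Hdx [acc [Hdv Hb]]].
      exists (acc + mu * v u). split; [|lra].
      unfold P. apply (is_derive_plus v (fun u => mu * x u) u acc (mu * v u) Hdv).
      apply is_derive_scal; exact Hdx. }
    set (t1 := 2 + Rabs (1 + mu * a - P 1) / K).
    assert (Ht1 : 2 <= t1).
    { unfold t1. assert (0 <= Rabs (1 + mu * a - P 1) / K)
        by (apply Rdiv_le_0_compat; [apply Rabs_pos|lra]). lra. }
    assert (HK1 : Rabs (1 + mu * a - P 1) <= K * (t1 - 2)).
    { unfold t1. replace (2 + Rabs (1 + mu * a - P 1) / K - 2) with (Rabs (1 + mu * a - P 1) / K) by ring.
      field_simplify; lra. }
    assert (Hv1 : forall u, t1 <= u -> 1 <= v u).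
    { intros u Hu. pose proof (HP u ltac:(lra)) as H1.
      destruct (Hrange u ltac:(lra) I) as [_ Hxa].
      assert (Q1 : mu * x u <= mu * a) by (apply Rmult_le_compat_l; lra).
      pose proof (Rle_abs (1 + mu * a - P 1)) as Q2.
      assert (Q3 : K * (t1 - 2) <= K * (u - 2)) by (apply Rmult_le_compat_l; lra).
      assert (Q4 : K * (u - 2) <= K * (u - 1)) by (apply Rmult_le_compat_l; lra).
      unfold P in H1, Q2, HK1. lra. }
    pose proof (deriv_lb x 1 t1 (t1 + a + 1) ltac:(lra)) as Hx.
    assert (H1 : 1 * (t1 + a + 1 - t1) <= x (t1 + a + 1) - x t1).
    { apply Hx. intros u Hu. exists (v u). split; [apply (Hacc u ltac:(lra) I)| apply Hv1; lra]. }
    destruct (Hrange t1 ltac:(lra) I). destruct (Hrange (t1 + a + 1) ltac:(lra) I). lra.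
  - exists tc. subst T. simpl in HT. split; [reflexivity|]. split; [exact HT|].
    split; [exact Hlim|]. intros t Ht. apply Hvpos; [lra|]. simpl; lra.
Qed.
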